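(* Let $\mathbb{F}$ be a field with $|\mathbb{F}| \ge n^2$. For every sufficiently large $n$, there exists a non-zero polynomial $Q \in \mathbb{F}[x_{1,1}, \ldots, x_{n,n}]$ of degree at most $n^3$ such that $Q(A)=0$ for every matrix $A\in\mathbb{F}^{n\times n}$ whose linear transformation is computed by a linear circuit of size at most $n^2/200$ (with no restriction on depth).
   Context: A linear circuit over $\mathbb{F}$ is a directed acyclic graph with $n$ input nodes labeled $X_1,\ldots,X_n$ and $n$ designated output nodes, each edge labeled by a scalar in $\mathbb{F}$. Each node computes a linear form in $X_1,\dots,X_n$: an input node computes its variable, and a node $u$ with children $v_1,\dots,v_k$ joined to it by edges labeled $\alpha_1,\dots,\alpha_k$ computes $\sum_i \alpha_i \ell_{v_i}$, where $\ell_{v_i}$ is the form computed by $v_i$. The size is the number of edges. The circuit computes the matrix $A$ whose $(i,j)$ entry is the coefficient of $X_i$ in the linear form computed at the $j$-th output node. $Q(A)$ denotes evaluation at $x_{i,j}=A_{i,j}$. *)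

(* Defs.v *)
From HB Require Import structures.
From mathcomp Require Import all_boot all_order all_algebra.
From mathcomp Require Import mpoly.
Set Implicit Arguments. Unset Strict Implicit. Unset Printing Implicit Defensive.
Import GRing.Theory.
Local Open Scope ring_scope.

(* A linear form sum_i c_i X_i in X_1..X_n is represented by the row vector
   (c_1 ... c_n) : 'rV[F]_n (coefficient of X_i at column i).

   A linear circuit is given by
   - a finite node set 'I_N,
   - a list E of labelled edges (v, u, alpha) : v is a child of u, i.e. the
     edge joins v to u with label alpha (multi-edges allowed),
   - an injective labelling inp : 'I_n -> 'I_N of the input nodes (inp i is X_i),
   - the designated output nodes out : 'I_n -> 'I_N,
   and it must be acyclic (witnessed by a ranking strictly increasing along
   every edge).  [val] is the assignment of linear forms to nodes: input
   nodes compute their variable, every other node u computes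
   sum over edges (v,u,alpha) of alpha * val v.  In a DAG this assignment
   exists and is unique, so quantifying it existentially is faithful. *)

Definition lc_acyclic (N : nat) (F : fieldType) (E : seq ('I_N * 'I_N * F)) :=
  exists rk : 'I_N -> nat, forall e, e \in E -> (rk e.1.1 < rk e.1.2)%N.

Definition lc_computes (F : fieldType) (n N : nat) (E : seq ('I_N * 'I_N * F))
    (inp out : 'I_n -> 'I_N) (val : 'I_N -> 'rV[F]_n) (A : 'M[F]_n) : Prop :=
  [/\ (forall i, val (inp i) = delta_mx 0 i),
      (forall u, u \notin codom inp ->
          val u = \sum_(e <- E | e.1.2 == u) e.2 *: val e.1.1)
    & (forall i j, A i j = val (out j) 0 i)].

Definition computable_by_linear_circuit_of_size (F : fieldType) (n s : nat)
    (A : 'M[F]_n) : Prop :=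
  exists (N : nat) (E : seq ('I_N * 'I_N * F)) (inp out : 'I_n -> 'I_N)
         (val : 'I_N -> 'rV[F]_n),
    [/\ (size E <= s)%N, injective inp, lc_acyclic E & lc_computes E inp out val A].

(* Polynomials in the n^2 variables x_{i,j}: variable x_{i,j} is the
   variable of index mxvec_index i j of {mpoly F[n * n]}.
   Q(A) := evaluation at x_{i,j} = A i j. *)
Definition eval_at_matrix (F : fieldType) (n : nat) (Q : {mpoly F[n * n]})
    (A : 'M[F]_n) : F :=
  Q.@[fun k => mxvec A 0 k].

Lemma eval_at_matrix_var (F : fieldType) (n : nat) (A : 'M[F]_n) (i j : 'I_n) :
  (fun k => mxvec A 0 k) (mxvec_index i j) = A i j.
Proof. by rewrite /= mxvecE. Qed.

(* |F| >= m, allowing F infinite. *)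
Definition card_at_least (F : fieldType) (m : nat) : Prop :=
  exists s : seq F, uniq s /\ size s = m.

(* Main.v *)
Require Import Defs.
From HB Require Import structures.
From mathcomp Require Import all_boot all_order all_algebra.
From mathcomp Require Import mpoly zify.
Set Implicit Arguments. Unset Strict Implicit. Unset Printing Implicit Defensive.
Import GRing.Theory.
Local Open Scope ring_scope.

Lemma normalize (F : fieldType) (n s : nat) (A : 'M[F]_n) :
  computable_by_linear_circuit_of_size s A ->
  exists (E : seq ('I_(n+n+s+s).+1 * 'I_(n+n+s+s).+1 * F))
         (inp out : 'I_n -> 'I_(n+n+s+s).+1) (val : 'I_(n+n+s+s).+1 -> 'rV[F]_n),
    [/\ (size E <= s)%N, injective inp, lc_acyclic E & lc_computes E inp out val A].
Proof.
case=> N [E [inp [out [val [szE injI [rk Hrk] [Hin Hnon Hout]]]]]].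
pose L := codom inp ++ codom out ++ [seq e.1.1 | e <- E] ++ [seq e.1.2 | e <- E].
pose R := [set x | x \in L].
have cardR : (#|R| <= n+n+s+s)%N.
  rewrite cardsE; apply: leq_trans (card_size L) _; rewrite /L !size_cat !size_codom !size_map !card_ord.
  lia.
pose f := fun x : 'I_N => (inord (index x (enum R)) : 'I_(n+n+s+s).+1).
have fK : {in R, forall x, (f x : nat) = index x (enum R)}.
  move=> x xR; rewrite inordK // ltnS (leq_trans _ cardR) //.
  by apply: ltnW; rewrite cardE index_mem mem_enum.
have finj : {in R &, injective f}.
  move=> x y xR yR fxy; apply: (@index_inj _ x (enum R) x y); rewrite ?mem_enum //.
  by rewrite -fK // -fK // fxy.
have inpR i : inp i \in R by rewrite inE /L mem_cat codom_f.
have outR i : out i \in R by rewrite inE /L !mem_cat codom_f orbT.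
have e1R e : e \in E -> e.1.1 \in R.
  by move=> eE; rewrite inE /L !mem_cat (map_f _ eE) !orbT.
have e2R e : e \in E -> e.1.2 \in R.
  by move=> eE; rewrite inE /L !mem_cat (map_f (fun e => e.1.2) eE) !orbT.
have pickf x : x \in R -> [pick z in R | f z == f x] = Some x.
  move=> xR; case: pickP => [z /andP[zR /eqP fz]|/(_ x)].
    by rewrite (finj _ _ zR xR fz).
  by rewrite xR eqxx.
pose val' y := if [pick x in R | f x == y] is Some x then val x else 0.
pose rk' y := if [pick x in R | f x == y] is Some x then rk x else 0%N.
exists [seq (f e.1.1, f e.1.2, e.2) | e <- E], (fun i => f (inp i)),
  (fun i => f (out i)), val'; split.
- by rewrite size_map.
- by move=> i j /finj => /(_ (inpR i) (inpR j)) /injI.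
- exists rk' => e' /mapP[e eE ->] /=.
  by rewrite /rk' !pickf ?e1R ?e2R //; exact: Hrk.
- split.
  + by move=> i; rewrite /val' pickf.
  + move=> u uI; rewrite big_map /= /val'.
    case: pickP => [x /andP[xR /eqP fx]| none].
      have xI : x \notin codom inp.
        apply/negP=> /codomP[i xi]; move/negP: uI; apply.
        by apply/codomP; exists i; rewrite -fx xi.
      rewrite (Hnon x xI) big_seq_cond [RHS]big_seq_cond.
      apply: eq_big => [e|e /andP[eE _]]; last by rewrite pickf ?e1R.
      case eE : (e \in E) => //=; rewrite -fx.
      by apply/eqP/eqP => [->//|/finj]; apply; rewrite ?e2R.
    rewrite big_seq_cond big1 // => e /andP[eE /eqP fe].
    by have := none e.1.2; rewrite e2R // fe eqxx.
  + by move=> i j; rewrite /val' pickf.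
Qed.

Section Param.
Variables (F : fieldType) (n s : nat).
Local Notation M := (n+n+s+s).+1.
Definition Top := ({ffun 'I_s -> 'I_M} * {ffun 'I_s -> 'I_M} *
   {ffun 'I_n -> 'I_M} * {ffun 'I_n -> 'I_M})%type.
Definition tsrc (t : Top) := t.1.1.1.
Definition ttgt (t : Top) := t.1.1.2.
Definition tinp (t : Top) := t.1.2.
Definition tout (t : Top) := t.2.

Fixpoint Vp (t : Top) (k : nat) (u : 'I_M) (j : 'I_n) : {mpoly F[s]} :=
  match k with
  | 0 => ((tinp t j == u)%:R)
  | k'.+1 => if u \in codom (tinp t) then (tinp t j == u)%:R
             else \sum_(i : 'I_s | ttgt t i == u) 'X_i * Vp t k' (tsrc t i) j
  end.

Lemma msize_natmp (b : nat) : (msize (b%:R : {mpoly F[s]}) <= 1)%N.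
Proof. by rewrite -mpolyC_nat mmeasureC leq_b1. Qed.

Lemma msize_Vp t k u j : (msize (Vp t k u j) <= 3 * k + 1)%N.
Proof.
elim: k u j => [|k IH] u j /=; first exact: msize_natmp.
case: ifP => _; first by apply: leq_trans (msize_natmp _) _; lia.
apply: leq_trans (mmeasure_sum _ _ _ _) _.
apply/bigmax_leqP => i _.
apply: leq_trans (msizeM_le _ _) _.
rewrite msizeX mdeg1. have := IH (tsrc t i) j. lia.
Qed.

Lemma param (A : 'M[F]_n) : computable_by_linear_circuit_of_size s A ->
  exists (t : Top) (w : 'I_s -> F),
    forall i j, A i j = (Vp t M (tout t j) i).@[w].
Proof.
case/normalize => E [inp [out [val [szE injI [rk Hrk] [Hin Hnon Hout]]]]].
pose def := (ord0 : 'I_M, ord0 : 'I_M, 0 : F).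
pose t : Top := ([ffun i : 'I_s => (nth def E i).1.1], [ffun i : 'I_s => (nth def E i).1.2],
   [ffun j => inp j], [ffun j => out j]).
pose w := fun i : 'I_s => (nth def E i).2.
exists t, w.
have key : forall k u, (#|[set x | (rk x < rk u)%N]| < k)%N ->
    forall j, val u 0 j = (Vp t k u j).@[w].
  elim => [//|k IH] u Hu j /=.
  case: ifP => [/codomP[i ->] | nI].
    rewrite ffunE Hin mxE rmorph_nat /tinp /= ffunE (inj_eq injI) eq_sym.
    by [].
  have nI' : u \notin codom inp.
    apply/negP=> /codomP[i ui]; move/negP: nI; apply.
    by apply/codomP; exists i; rewrite /tinp /= ffunE.
  rewrite (Hnon u nI') summxE rmorph_sum /=.
  under eq_bigr do rewrite mxE.
  rewrite (big_nth def) big_mkord (big_ord_widen_cond s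
     (fun i => (nth def E i).1.2 == u) (fun i => (nth def E i).2 * val (nth def E i).1.1 0 j) szE).
  rewrite [RHS](bigID (fun i : 'I_s => (i < size E)%N)) /=.
  rewrite [X in _ = _ + X]big1 ?addr0; last first.
    move=> i /andP[_]; rewrite -leqNgt => H.
    by rewrite mevalM mevalXU /w nth_default // mul0r.
  apply: eq_big => [i|i /andP[/eqP Hi Hl]]; first by rewrite /ttgt /= ffunE.
  rewrite mevalM mevalXU /tsrc /= ffunE (IH (nth def E i).1.1) //.
  have eE := mem_nth def Hl.
  have := Hrk _ eE; rewrite Hi => Hr.
  rewrite -ltnS (leq_trans _ Hu) // ltnS.
  apply: leq_ltn_trans (_ : (#|[set x | (rk x < rk u)%N] :\ (nth def E i).1.1| < _)%N).
    apply/subset_leq_card/subsetP => x; rewrite !inE => Hx.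
    by rewrite (ltn_trans Hx Hr) andbT; apply/eqP => ex; rewrite ex ltnn in Hx.
  by rewrite [X in (_ < X)%N](cardsD1 (nth def E i).1.1) inE Hr.
move=> i j; rewrite Hout (key M) ?/tout /= ?ffunE //.
have H1 : (#|[set x | (rk x < rk (out j))%N]| <= #|[set~ out j]|)%N.
  apply/subset_leq_card/subsetP => x; rewrite !inE => Hx.
  by apply/eqP => ex; rewrite ex ltnn in Hx.
apply: leq_ltn_trans H1 _; by rewrite cardsC1 card_ord.
Qed.
End Param.

Lemma msize_prod (F : fieldType) k (I : Type) (r : seq I) (P : pred I) (G : I -> {mpoly F[k]}) :
  (msize (\prod_(i <- r | P i) G i) <= (\sum_(i <- r | P i) (msize (G i)).+1).+1)%N.
Proof.
elim/big_rec2: _ => [|i x p _ IH]; first by rewrite msize1.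
apply: leq_trans (msizeM_le _ _) _; lia.
Qed.

Lemma msize_exp (F : fieldType) k (p : {mpoly F[k]}) e :
  (msize (p ^+ e) <= e * (msize p).+1 + 1)%N.
Proof.
elim: e => [|e IH]; first by rewrite expr0 msize1.
rewrite exprS; apply: leq_trans (msizeM_le _ _) _; lia.
Qed.

Lemma mon_inj k m (f g : {ffun 'I_k -> 'I_m}) :
  [multinom (f i : nat) | i < k] = [multinom (g i : nat) | i < k] -> f = g.
Proof.
move=> H; apply/ffunP => i; apply/val_inj.
by have := congr1 (fun mm : 'X_{1..k} => mm i) H; rewrite /= !mnmE.
Qed.

Lemma nonzero_ker (F : fieldType) r c (Mx : 'M[F]_(r, c)) : (c < r)%N ->
  exists x : 'rV[F]_r, exists i, x 0 i != 0 /\ x *m Mx = 0.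
Proof.
move=> Hcr.
have Hk : kermx Mx != 0.
  rewrite -mxrank_eq0 mxrank_ker subn_eq0 -ltnNge.
  exact: leq_ltn_trans (rank_leq_col Mx) Hcr.
have : ~~ [forall i, forall j, kermx Mx i j == 0].
  apply: contra Hk => /forallP H; apply/eqP/matrixP => i j; rewrite [RHS]mxE.
  by have /forallP/(_ j)/eqP := H i.
rewrite negb_forall => /existsP[i0]; rewrite negb_forall => /existsP[j0 H].
exists (row i0 (kermx Mx)), j0; split; first by rewrite mxE.
by rewrite -row_mul mulmx_ker row0.
Qed.

Lemma leq_expl m1 m2 e : (m1 <= m2)%N -> (m1 ^ e <= m2 ^ e)%N.
Proof. by move=> H; elim: e => [|e IH] //; rewrite !expnS leq_mul. Qed.

Lemma count_ineq n s M b : (200 <= n)%N -> s = (n ^ 2 %/ 200)%N ->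
  M = (n+n+s+s).+1 -> b = ((3*M+2)*(n*n*n) + 2*(n*n))%N ->
  (M ^ s * M ^ s * M ^ n * M ^ n * b.+1 ^ s < n ^ (n * n))%N.
Proof.
move=> Hn es eM eb.
have hs : (s * 200 <= n * n)%N by rewrite es mulnn; exact: leq_trunc_div.
have hM : (M <= n ^ 2)%N by rewrite eM -mulnn; nia.
have hb : (b.+1 <= n ^ 6)%N.
  have h3 : (3 * M + 2 <= 3 * (n * n) + 2)%N by rewrite eM; nia.
  have h5 : (b.+1 <= (3 * (n * n) + 2) * (n * n * n) + 2 * (n * n) + 1)%N.
    rewrite eb; have := leq_mul h3 (leqnn (n*n*n)); lia.
  apply: leq_trans h5 _.
  have -> : (n ^ 6 = n * (n * n) * (n * n * n))%N.
    by rewrite !expnS expn0; lia.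
  set q := (n * n * n)%N.
  have hq : (n * n <= q)%N by rewrite /q leq_pmulr //; lia.
  have hq1 : (1 <= n * n)%N by nia.
  nia.
apply: (@leq_ltn_trans ((n ^ 2) ^ s * (n ^ 2) ^ s * (n ^ 2) ^ n * (n ^ 2) ^ n * (n ^ 6) ^ s)).
  by rewrite !leq_mul ?leq_expl.
rewrite -!expnM -!expnD ltn_exp2l; last lia.
nia.
Qed.

Theorem theorem1p2 :
  exists n0 : nat, forall n : nat, (n0 <= n)%N ->
  forall F : fieldType, card_at_least F (n ^ 2) ->
  exists Q : {mpoly F[n * n]},
    [/\ Q != 0,
        (msize Q <= (n ^ 3).+1)%N
      & forall A : 'M[F]_n,
          @computable_by_linear_circuit_of_size F n (n ^ 2 %/ 200) A ->
          @eval_at_matrix F n Q A = 0].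
Proof.
exists 200%N => n Hn F _.
set s := (n ^ 2 %/ 200)%N.
pose M := (n+n+s+s).+1.
pose Pm (t : Top n s) : 'M[{mpoly F[s]}]_n := \matrix_(i, j) Vp F t M (tout t j) i.
pose lq (t : Top n s) : (n*n).-tuple {mpoly F[s]} := [tuple mxvec (Pm t) 0 k | k < n*n].
pose b := ((3*M+2)*(n*n*n) + 2*(n*n))%N.
pose Mon1 := {ffun 'I_(n*n) -> 'I_n}.
pose Mon2 := {ffun 'I_s -> 'I_b.+1}.
pose mon1 (m : Mon1) : 'X_{1..n*n} := [multinom (m k : nat) | k < n*n].
pose mon2 (m : Mon2) : 'X_{1..s} := [multinom (m k : nat) | k < s].
pose Col := (Top n s * Mon2)%type.
pose Mx := \matrix_(r < #|{:Mon1}|, c < #|{:Col}|)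
   ((('X_[mon1 (enum_val r)] : {mpoly F[n*n]}) \mPo lq (enum_val c).1) @_ (mon2 (enum_val c).2)).
have card_lt : (#|{:Col}| < #|{:Mon1}|)%N.
  rewrite !card_prod !card_ffun !card_ord.
  exact: (count_ineq Hn erefl erefl erefl).
have [x [c0 [xc0 Hx]]] := nonzero_ker Mx card_lt.
pose c (m : Mon1) := x 0 (enum_rank m).
pose Q := \sum_(m : Mon1) c m *: ('X_[mon1 m] : {mpoly F[n*n]}).
have Hlq t k : (msize (tnth (lq t) k) <= 3 * M + 1)%N.
  rewrite tnth_mktuple; case/mxvec_indexP: k => i j; rewrite mxvecE mxE.
  exact: msize_Vp.
have HQc t : Q \mPo lq t = \sum_(m : Mon1) c m *: ('X_[mon1 m] \mPo lq t).
  rewrite raddf_sum; apply: eq_bigr => m _; apply: (comp_mpolyZ (c m) _ (lq t)).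
exists Q; split.
- apply/eqP => HQ.
  have := congr1 (mcoeff (mon1 (enum_val c0))) HQ.
  rewrite mcoeff0 raddf_sum (bigD1 (enum_val c0)) //= mcoeffZ mcoeffX eqxx mulr1.
  rewrite big1 ?addr0 /c ?enum_valK; first by move/eqP; rewrite (negbTE xc0).
  move=> m /negbTE Hm; rewrite mcoeffZ mcoeffX.
  case: eqP => [/mon_inj E|]; last by rewrite mulr0.
  by rewrite E eqxx in Hm.
- apply: leq_trans (mmeasure_sum _ _ _ _) _.
  apply/bigmax_leqP => m _; apply: leq_trans (msizeZ_le _ _) _.
  rewrite msizeX ltnS mdegE.
  apply: leq_trans (_ : (\sum_(k < n * n) n <= _)%N).
    by apply: leq_sum => k _; rewrite mnmE ltnW.
  by rewrite sum_nat_const card_ord !expnS expn0 muln1 mulnC.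
- move=> A /(@param F) [t [w HA]].
  have EA : A = map_mx (meval w) (Pm t) by apply/matrixP => i j; rewrite !mxE HA.
  rewrite /eval_at_matrix.
  transitivity ((Q \mPo lq t).@[w]).
    rewrite comp_mpoly_meval; apply: meval_eq => k.
    by rewrite tnth_mktuple EA -map_mxvec mxE.
  suff -> : Q \mPo lq t = 0 by rewrite meval0.
  apply/mpolyP => mm; rewrite mcoeff0.
  case: (ltnP (mdeg mm) b.+1) => Hmm.
  + pose f : Mon2 := [ffun i => inord (mm i)].
    have mmE : mm = mon2 f.
      apply/mnmP => i; rewrite mnmE ffunE inordK // ltnS.
      apply: leq_trans _ (Hmm : (mdeg mm <= b)%N).
      by rewrite mdegE (bigD1 i) //= leq_addr.
    have := congr1 (fun v : 'rV[F]_#|{:Col}| => v 0 (enum_rank ((t, f) : Col))) Hx.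
    rewrite /= !mxE (reindex enum_rank) /=; last exact: onW_bij (enum_rank_bij _).
    under eq_bigr do rewrite mxE !enum_rankK /=.
    move=> H; apply: etrans _ H; rewrite HQc raddf_sum mmE; apply: eq_bigr => m _; exact: mcoeffZ.
  + apply/eqP; rewrite mcoeff_eq0; apply: msize_mdeg_ge; apply: leq_trans Hmm.
    rewrite HQc; apply: leq_trans (mmeasure_sum _ _ _ _) _.
    apply/bigmax_leqP => m _; apply: leq_trans (msizeZ_le _ _) _.
    rewrite comp_mpolyX; apply: leq_trans (msize_prod _ _ _) _.
    rewrite ltnS.
    apply: leq_trans (_ : (\sum_(k < n * n) (n * (3 * M + 2) + 2) <= _)%N).
      apply: leq_sum => k _; rewrite mnmE.
      have h1 := msize_exp (tnth (lq t) k) (m k).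
      have h2 := Hlq t k.
      have h3 : (m k <= n)%N by apply: ltnW.
      have h4 := leq_mul h3 (leqnn (3 * M + 2)).
      have h5 : (m k * (msize (tnth (lq t) k)).+1 <= m k * (3 * M + 2))%N.
        by apply: leq_mul => //; lia.
      apply: leq_ltn_trans h1 _; rewrite addn1 addn2 !ltnS; exact: leq_trans h5 h4.
    rewrite sum_nat_const card_ord /b; lia.
Qed.
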